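(* There is a procedure which makes six two-qubit measurements, each on a fresh copy of an unknown two-qubit state $|\psi\rangle$, and which, for every $|\psi\rangle$ and every collection of outcomes of these measurements each of which occurs with nonzero probability on $|\psi\rangle$, outputs with certainty a two-qubit Pauli string $P\in\{I,X,Y,Z\}^{\otimes 2}$ that does not stabilize $|\psi\rangle$ (i.e. such that measuring the observable $P$ on $|\psi\rangle$ does not have a deterministic outcome).
   Context: For a Pauli string $P$ (a Hermitian operator with eigenvalues $\pm1$), the Pauli measurement of $P$ projects onto its $+1$ or $-1$ eigenspace and reports the eigenvalue. $P$ is called a stabilizer of a state if this outcome is deterministic and a non-stabilizer otherwise. A joint measurement of pairwise commuting Pauli strings gives outcomes for each of them, and the outcome of a product of these strings is the product of their outcomes (times the sign relating the product to the positive Pauli string). *)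

(* Defs.v *)
(* Complex scalars: an arbitrary numClosedFieldType C
   (e.g. the complex numbers R[i], or algC). *)
From HB Require Import structures.
From mathcomp Require Import all_boot all_order all_algebra.
Set Implicit Arguments. Unset Strict Implicit. Unset Printing Implicit Defensive.
Import Order.TTheory GRing.Theory Num.Theory.
Local Open Scope ring_scope.

Section Quantum.
Variable C : numClosedFieldType.

Definition adjmx m n (A : 'M[C]_(m, n)) : 'M[C]_(n, m) := (map_mx Num.conj A)^T.

(* a two-qubit (pure) state: a unit vector of C^4 = C^2 (x) C^2 *)
Definition is_state (psi : 'cV[C]_4) : Prop := adjmx psi *m psi = 1%:M.

Definition is_projmeas (O : finType) (M : O -> 'M[C]_4) : Prop :=
  (forall o, adjmx (M o) = M o) /\ (forall o, M o *m M o = M o) /\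
  \sum_(o : O) M o = 1%:M.

Definition prob (O : finType) (M : O -> 'M[C]_4) (o : O) (psi : 'cV[C]_4) : C :=
  (adjmx psi *m M o *m psi) 0 0.

(* single-qubit Paulis, indexed 0 = I, 1 = X, 2 = Y, 3 = Z *)
Definition pauli1 (a : 'I_4) : 'M[C]_2 :=
  \matrix_(r < 2, c < 2)
    match nat_of_ord a, nat_of_ord r, nat_of_ord c with
    | 0, 0, 0 => 1 | 0, 1, 1 => 1
    | 1, 0, 1 => 1 | 1, 1, 0 => 1
    | 2, 0, 1 => - 'i | 2, 1, 0 => 'i
    | 3, 0, 0 => 1 | 3, 1, 1 => -1
    | _, _, _ => 0
    end.

(* Kronecker product of 2x2 matrices; basis index i of C^4 = 2 * i1 + i2 *)
Definition kron2 (A B : 'M[C]_2) : 'M[C]_4 :=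
  \matrix_(i < 4, j < 4)
    (A (inord (i %/ 2)) (inord (j %/ 2)) * B (inord (i %% 2)) (inord (j %% 2))).

Definition pauli2 (p : 'I_4 * 'I_4) : 'M[C]_4 := kron2 (pauli1 p.1) (pauli1 p.2).

(* the Pauli measurement of P: projectors onto the +1 (b = false) and
   -1 (b = true) eigenspaces of P *)
Definition pauli_meas (p : 'I_4 * 'I_4) (b : bool) : 'M[C]_4 :=
  2^-1 *: (1%:M + (-1) ^+ b *: pauli2 p).

Definition stabilizes (p : 'I_4 * 'I_4) (psi : 'cV[C]_4) : Prop :=
  exists b : bool, prob (pauli_meas p) b psi = 1.

End Quantum.

(* Main.v *)
Require Import Defs.
From mathcomp Require Import all_boot all_order all_algebra.
From mathcomp Require Import ring.
Import GRing.Theory Num.Theory.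
Local Open Scope ring_scope.
Set Implicit Arguments. Unset Strict Implicit.

Section Abs.
Variable C : numClosedFieldType.

Lemma adjmxD m n (A B : 'M[C]_(m, n)) : adjmx (A + B) = adjmx A + adjmx B.
Proof. by apply/matrixP => i j; rewrite !mxE rmorphD. Qed.
Lemma adjmxN m n (A : 'M[C]_(m, n)) : adjmx (- A) = - adjmx A.
Proof. by apply/matrixP => i j; rewrite !mxE rmorphN. Qed.
Lemma adjmxZ m n a (A : 'M[C]_(m, n)) : adjmx (a *: A) = a^* *: adjmx A.
Proof. by apply/matrixP => i j; rewrite !mxE rmorphM. Qed.
Lemma adjmx0 m n : adjmx (0 : 'M[C]_(m, n)) = 0.
Proof. by apply/matrixP => i j; rewrite !mxE rmorph0. Qed.
Lemma adjmx1 n : adjmx (1%:M : 'M[C]_n) = 1%:M.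
Proof. by apply/matrixP => i j; rewrite !mxE rmorph_nat eq_sym. Qed.
Lemma adjmxM m n p (A : 'M[C]_(m, n)) (B : 'M[C]_(n, p)) :
  adjmx (A *m B) = adjmx B *m adjmx A.
Proof.
apply/matrixP => i j; rewrite !mxE rmorph_sum; apply: eq_bigr => k _.
by rewrite !mxE rmorphM mulrC.
Qed.

Definition proj (P : 'M[C]_4) (b : bool) : 'M[C]_4 :=
  2^-1 *: (1%:M + (-1) ^+ b *: P).

Lemma sign2 (b : bool) : (-1) ^+ b * (-1) ^+ b = 1 :> C.
Proof. by rewrite -signr_addb addbb expr0. Qed.

Lemma half2 (M : 'M[C]_4) : 2^-1 *: (M + M) = M.
Proof.
rewrite -mulr2n -scaler_nat scalerA mulVf ?scale1r //.
by rewrite pnatr_eq0.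
Qed.

Lemma adj_proj P b : adjmx P = P -> adjmx (proj P b) = proj P b.
Proof.
move=> hP; rewrite /proj adjmxZ adjmxD adjmx1 adjmxZ hP rmorph_sign.
by rewrite fmorphV rmorph_nat.
Qed.

Lemma P_proj P b : P *m P = 1%:M -> P *m proj P b = (-1) ^+ b *: proj P b.
Proof.
move=> h; rewrite /proj -scalemxAr mulmxDr mulmx1 -scalemxAr h.
rewrite [RHS]scalerA [_ * 2^-1]mulrC -[RHS]scalerA.
rewrite [X in _ = _ *: X]scalerDr [X in _ = _ *: (_ + X)]scalerA sign2 scale1r.
by rewrite [X in _ = _ *: X]addrC.
Qed.

Lemma proj_eig P (M : 'M[C]_4) (c : bool) : P *m M = (-1) ^+ c *: M -> proj P c *m M = M.
Proof.
move=> h; rewrite /proj -scalemxAl mulmxDl mul1mx -scalemxAl h.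
by rewrite scalerA sign2 scale1r half2.
Qed.

Lemma proj_idem P b : P *m P = 1%:M -> proj P b *m proj P b = proj P b.
Proof. by move=> h; apply: proj_eig; rewrite P_proj. Qed.

Lemma proj_sum P : proj P false + proj P true = 1%:M.
Proof.
rewrite /proj expr0 expr1 scale1r scaleN1r -scalerDr addrACA subrr addr0.
exact: half2.
Qed.

Lemma comm_proj X A s : X *m A = A *m X -> X *m proj A s = proj A s *m X.
Proof.
move=> h; rewrite /proj -scalemxAr -scalemxAl mulmxDr mulmxDl mulmx1 mul1mx.
by rewrite -!scalemxAr -!scalemxAl h.
Qed.

Lemma proj_comm A B s t : A *m B = B *m A ->
  proj A s *m proj B t = proj B t *m proj A s.
Proof.
move=> h; apply: comm_proj; apply/esym; apply: comm_proj; exact/esym.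
Qed.

Definition ctxM (A B : 'M[C]_4) (o : bool * bool) : 'M[C]_4 :=
  proj A o.1 *m proj B o.2.

Definition good (P : 'M[C]_4) := adjmx P = P /\ P *m P = 1%:M.

Lemma ctx_projmeas A B : good A -> good B -> A *m B = B *m A ->
  is_projmeas (ctxM A B).
Proof.
move=> [hA hA2] [hB hB2] hAB; split; [|split].
- move=> o; rewrite /ctxM adjmxM !adj_proj //; exact: proj_comm.
- move=> o; rewrite /ctxM mulmxA -(mulmxA (proj A o.1)) -proj_comm //.
  by rewrite mulmxA proj_idem // -mulmxA proj_idem.
- rewrite -(pair_bigA _ (fun a b => proj A a *m proj B b)) /= !big_bool /=.
  rewrite -!mulmxDr [proj B true + _]addrC proj_sum !mulmx1.
  by rewrite addrC proj_sum.
Qed.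

Lemma certA A B o : A *m A = 1%:M -> proj A o.1 *m ctxM A B o = ctxM A B o.
Proof.
move=> h; apply: proj_eig; by rewrite /ctxM mulmxA P_proj // -scalemxAl.
Qed.

Lemma certB A B o : B *m B = 1%:M -> A *m B = B *m A ->
  proj B o.2 *m ctxM A B o = ctxM A B o.
Proof.
move=> h hAB; apply: proj_eig.
rewrite /ctxM mulmxA (comm_proj _ (esym hAB)) -mulmxA P_proj // -scalemxAr //.
Qed.

Lemma certC A B Cm o (sg : bool) : A *m A = 1%:M -> B *m B = 1%:M ->
  A *m B = B *m A -> Cm = (-1) ^+ sg *: (A *m B) ->
  proj Cm (o.1 (+) o.2 (+) sg) *m ctxM A B o = ctxM A B o.
Proof.
move=> hA hB hAB ->; apply: proj_eig.
rewrite /ctxM -scalemxAl -mulmxA (mulmxA B) (comm_proj _ (esym hAB)) -mulmxA.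
rewrite P_proj // -!scalemxAr mulmxA P_proj // -!scalemxAl !scalerA !signr_addb.
congr (_ *: _); ring.
Qed.

Lemma zero_of_norm (y : 'cV[C]_4) : (adjmx y *m y) 0 0 = 0 -> y = 0.
Proof.
rewrite mxE => h.
have h2 : forall k : 'I_4, (adjmx y) 0 k * y k 0 = 0.
  move=> k; apply: (psumr_eq0P _ h) => // l _.
  by rewrite !mxE -normCKC exprn_ge0.
apply/matrixP => i j; rewrite (ord1 j) mxE.
have := h2 i; rewrite /= !mxE -normCKC => /eqP.
by rewrite sqrf_eq0 normr_eq0 => /eqP.
Qed.

Lemma kill P psi b : good P -> is_state psi ->
  (adjmx psi *m proj P b *m psi) 0 0 = 1 -> proj P (~~ b) *m psi = 0.
Proof.
move=> [hP hP2] hs hb.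
have hQ : proj P (~~ b) = 1%:M - proj P b.
  by rewrite -(proj_sum P); case: b hb => _ /=; [rewrite addrK | rewrite addrC addKr].
apply: zero_of_norm.
rewrite adjmxM mulmxA -(mulmxA (adjmx psi)) adj_proj // proj_idem //.
rewrite hQ mulmxBr mulmx1 mulmxBl.
have e : forall (X Y : 'M[C]_1), (X - Y) 0 0 = X 0 0 - Y 0 0 by move=> X Y; rewrite !mxE.
by rewrite e hb hs mxE subrr.
Qed.

Lemma zero_prob P u (M : 'M[C]_4) (psi : 'cV[C]_4) : adjmx P = P -> proj P u *m psi = 0 ->
  proj P u *m M = M -> (adjmx psi *m M *m psi) 0 0 = 0.
Proof.
move=> hP h0 hM; rewrite -hM mulmxA -(adj_proj u hP) -adjmxM h0 adjmx0.
by rewrite !mul0mx mxE.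
Qed.

Lemma nonstab P (M1 M2 : 'M[C]_4) u (psi : 'cV[C]_4) : good P -> is_state psi ->
  proj P u *m M1 = M1 -> proj P (~~ u) *m M2 = M2 ->
  (adjmx psi *m M1 *m psi) 0 0 != 0 -> (adjmx psi *m M2 *m psi) 0 0 != 0 ->
  ~ exists b, (adjmx psi *m proj P b *m psi) 0 0 = 1.
Proof.
move=> hg hs h1 h2 n1 n2 [b hb].
have K := kill hg hs hb.
have hP := hg.1.
case: (eqVneq b u) => [eb | nb].
  by move: n2; rewrite (zero_prob hP _ h2) ?eqxx // -eb.
have eb : b = ~~ u by move: nb; case: (b); case: (u).
by move: n1; rewrite (zero_prob hP _ h1) ?eqxx // -(negbK u) -eb.
Qed.

End Abs.

Section Conc.
Variable C : numClosedFieldType.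
Definition oI : 'I_4 := @Ordinal 4 0 isT.
Definition oX : 'I_4 := @Ordinal 4 1 isT.
Definition oY : 'I_4 := @Ordinal 4 2 isT.
Definition oZ : 'I_4 := @Ordinal 4 3 isT.
Definition tab (l : seq (seq C)) : 'M[C]_4 := \matrix_(i < 4, j < 4) nth 0 (nth [::] l i) j.
Ltac simp := rewrite ?(mul0r, mulr0, mul1r, mulr1, add0r, addr0, mulrNN, mulN1r, mulrN1, opprK, oppr0, mulrN, mulNr, rmorphN, rmorphM, rmorph0, rmorph1).
Ltac fin := rewrite ?conjCi -?expr2 ?sqrrN ?sqrCi ?opprK //.
Ltac mxcomp := apply/matrixP; case=> [[|[|[|[|?]]]] ?] //; case=> [[|[|[|[|?]]]] ?] //;
  rewrite !mxE ?big_ord_recr ?big_ord0 /= ?mxE; rewrite ?inordK //=; simp; fin.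

Definition tXI := tab [:: [:: 0; 0; 1; 0]; [:: 0; 0; 0; 1]; [:: 1; 0; 0; 0]; [:: 0; 1; 0; 0]].
Definition tIX := tab [:: [:: 0; 1; 0; 0]; [:: 1; 0; 0; 0]; [:: 0; 0; 0; 1]; [:: 0; 0; 1; 0]].
Definition tXX := tab [:: [:: 0; 0; 0; 1]; [:: 0; 0; 1; 0]; [:: 0; 1; 0; 0]; [:: 1; 0; 0; 0]].
Definition tIZ := tab [:: [:: 1; 0; 0; 0]; [:: 0; -1; 0; 0]; [:: 0; 0; 1; 0]; [:: 0; 0; 0; -1]].
Definition tZI := tab [:: [:: 1; 0; 0; 0]; [:: 0; 1; 0; 0]; [:: 0; 0; -1; 0]; [:: 0; 0; 0; -1]].
Definition tZZ := tab [:: [:: 1; 0; 0; 0]; [:: 0; -1; 0; 0]; [:: 0; 0; -1; 0]; [:: 0; 0; 0; 1]].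
Definition tXZ := tab [:: [:: 0; 0; 1; 0]; [:: 0; 0; 0; -1]; [:: 1; 0; 0; 0]; [:: 0; -1; 0; 0]].
Definition tZX := tab [:: [:: 0; 1; 0; 0]; [:: 1; 0; 0; 0]; [:: 0; 0; 0; -1]; [:: 0; 0; -1; 0]].
Definition tYY := tab [:: [:: 0; 0; 0; -1]; [:: 0; 0; 1; 0]; [:: 0; 1; 0; 0]; [:: -1; 0; 0; 0]].

Lemma eXI : pauli2 C (oX, oI) = tXI. Proof. mxcomp. Qed.
Lemma eIX : pauli2 C (oI, oX) = tIX. Proof. mxcomp. Qed.
Lemma eXX : pauli2 C (oX, oX) = tXX. Proof. mxcomp. Qed.
Lemma eIZ : pauli2 C (oI, oZ) = tIZ. Proof. mxcomp. Qed.
Lemma eZI : pauli2 C (oZ, oI) = tZI. Proof. mxcomp. Qed.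
Lemma eZZ : pauli2 C (oZ, oZ) = tZZ. Proof. mxcomp. Qed.
Lemma eXZ : pauli2 C (oX, oZ) = tXZ. Proof. mxcomp. Qed.
Lemma eZX : pauli2 C (oZ, oX) = tZX. Proof. mxcomp. Qed.
Lemma eYY : pauli2 C (oY, oY) = tYY. Proof. mxcomp. Qed.

Lemma gXI : good tXI. Proof. by split; rewrite /adjmx; mxcomp. Qed.
Lemma gIX : good tIX. Proof. by split; rewrite /adjmx; mxcomp. Qed.
Lemma gXX : good tXX. Proof. by split; rewrite /adjmx; mxcomp. Qed.
Lemma gIZ : good tIZ. Proof. by split; rewrite /adjmx; mxcomp. Qed.
Lemma gZI : good tZI. Proof. by split; rewrite /adjmx; mxcomp. Qed.
Lemma gZZ : good tZZ. Proof. by split; rewrite /adjmx; mxcomp. Qed.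
Lemma gXZ : good tXZ. Proof. by split; rewrite /adjmx; mxcomp. Qed.
Lemma gZX : good tZX. Proof. by split; rewrite /adjmx; mxcomp. Qed.
Lemma gYY : good tYY. Proof. by split; rewrite /adjmx; mxcomp. Qed.

Lemma c0 : tXI *m tIX = tIX *m tXI. Proof. mxcomp. Qed.
Lemma c1 : tIZ *m tZI = tZI *m tIZ. Proof. mxcomp. Qed.
Lemma c2 : tXZ *m tZX = tZX *m tXZ. Proof. mxcomp. Qed.
Lemma c3 : tXI *m tIZ = tIZ *m tXI. Proof. mxcomp. Qed.
Lemma c4 : tIX *m tZI = tZI *m tIX. Proof. mxcomp. Qed.
Lemma c5 : tXX *m tZZ = tZZ *m tXX. Proof. mxcomp. Qed.
Lemma p0 : tXX = tXI *m tIX. Proof. mxcomp. Qed.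
Lemma p1 : tZZ = tIZ *m tZI. Proof. mxcomp. Qed.
Lemma p2 : tYY = tXZ *m tZX. Proof. mxcomp. Qed.
Lemma p3 : tXZ = tXI *m tIZ. Proof. mxcomp. Qed.
Lemma p4 : tZX = tIX *m tZI. Proof. mxcomp. Qed.
Lemma p5 : tYY = - (tXX *m tZZ). Proof. mxcomp. Qed.

End Conc.

Section Main.
Variable C : numClosedFieldType.

Definition cell (r c : nat) : 'I_4 * 'I_4 :=
  match r, c with
  | 0, 0 => (oX, oI) | 0, 1 => (oI, oX) | 0, _ => (oX, oX)
  | 1, 0 => (oI, oZ) | 1, 1 => (oZ, oI) | 1, _ => (oZ, oZ)
  | _, 0 => (oX, oZ) | _, 1 => (oZ, oX) | _, _ => (oY, oY)
  end.

Definition member (k j : nat) := if (k < 3)%N then cell k j else cell j (k - 3)%N.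
Definition memT (k j : nat) : 'M[C]_4 := pauli2 C (member k j).
Definition sigk (k : nat) : bool := (5 <= k)%N.

Lemma good_cell r c : good (pauli2 C (cell r c)).
Proof.
case: r => [|[|r]]; case: c => [|[|c]] /=;
  rewrite ?eXI ?eIX ?eXX ?eIZ ?eZI ?eZZ ?eXZ ?eZX ?eYY;
  auto using gXI, gIX, gXX, gIZ, gZI, gZZ, gXZ, gZX, gYY.
Qed.

Lemma good_mem k j : good (memT k j).
Proof. by rewrite /memT /member; case: ifP => _; apply: good_cell. Qed.

Lemma ctx_facts k :
  memT k 0 *m memT k 1 = memT k 1 *m memT k 0 /\
  memT k 2 = (-1) ^+ sigk k *: (memT k 0 *m memT k 1).
Proof.
rewrite /memT /member /sigk.
case: k => [|[|[|k]]] /=.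
- rewrite eXI eIX eXX; split; [exact: c0 | by rewrite -p0 expr0 scale1r].
- rewrite eIZ eZI eZZ; split; [exact: c1 | by rewrite -p1 expr0 scale1r].
- rewrite eXZ eZX eYY; split; [exact: c2 | by rewrite -p2 expr0 scale1r].
- rewrite ?subn0; case: k => [|[|k]] /=.
  + rewrite eXI eIZ eXZ; split; [exact: c3 | by rewrite -p3 expr0 scale1r].
  + rewrite eIX eZI eZX; split; [exact: c4 | by rewrite -p4 expr0 scale1r].
  + rewrite eXX eZZ eYY; split; [exact: c5 | by rewrite p5 expr1 scaleN1r].
Qed.

Definition bitk (k : nat) (o : bool * bool) (j : nat) : bool :=
  match j with 0 => o.1 | 1 => o.2 | _ => o.1 (+) o.2 (+) sigk k end.

Definition ctxk (k : nat) := ctxM (memT k 0) (memT k 1).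

Lemma cert k o j : proj (memT k j) (bitk k o j) *m ctxk k o = ctxk k o.
Proof.
have [hc hp] := ctx_facts k.
case: j => [|[|j]] /=.
- apply: certA; exact: (good_mem k 0).2.
- apply: certB => //; exact: (good_mem k 1).2.
- have -> : memT k j.+2 = memT k 2.
    by rewrite /memT /member; case: ifP => _ //; case: k => [|[|k]].
  apply: certC => //; [exact: (good_mem k 0).2 | exact: (good_mem k 1).2].
Qed.

End Main.

Definition mism (s : seq (bool * bool)) (rc : 'I_3 * 'I_3) : bool :=
  bitk rc.1 (nth (false, false) s rc.1) rc.2 !=
  bitk (3 + rc.2) (nth (false, false) s (3 + rc.2)) rc.1.

Lemma comb (s : seq (bool * bool)) : size s = 6%N -> exists rc, mism s rc.
Proof.
case: s => [|[a0 b0] [|[a1 b1] [|[a2 b2] [|[c0 d0] [|[c1 d1] [|[c2 d2] [|]]]]]]] //= _.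
apply/existsP; rewrite -negb_forall; apply/negP => /forallP H.
have h := fun r c (hr : (r < 3)%N) (hc : (c < 3)%N) => H (Ordinal hr, Ordinal hc).
move: (h 0 0 isT isT) (h 0 1 isT isT) (h 0 2 isT isT) (h 1 0 isT isT) (h 1 1 isT isT)
  (h 1 2 isT isT) (h 2 0 isT isT) (h 2 1 isT isT) (h 2 2 isT isT).
rewrite /mism /bitk /sigk /=; clear h H.
move=> /eqP-> /eqP-> /eqP<- /eqP-> /eqP-> /eqP<- /eqP-> /eqP->.
by case: c0; case: d0; case: c1; case: d1.
Qed.

Unset Implicit Arguments.

Theorem mainTheorem6 (C : numClosedFieldType) :
  exists (O : finType) (meas : seq O -> O -> 'M[C]_4)
         (out : 6.-tuple O -> 'I_4 * 'I_4),
    (forall h : seq O, is_projmeas (meas h)) /\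
    forall (psi : 'cV[C]_4) (os : 6.-tuple O),
      is_state psi ->
      (forall k : 'I_6, prob (meas (take k os)) (tnth os k) psi != 0) ->
      ~ stabilizes (out os) psi.
Proof.
pose out := fun os : 6.-tuple (bool * bool) =>
  match [pick rc | mism os rc] with Some rc => cell rc.1 rc.2 | None => (oI, oI) end.
exists (bool * bool)%type, (fun h => ctxk C (size h)), out; split.
  move=> h; apply: ctx_projmeas; [exact: good_mem | exact: good_mem | exact: (ctx_facts _ _).1].
move=> psi os hs hp; rewrite /out; case: pickP => [[r c] hm | hn]; last first.
  have [rc hrc] := comb (size_tuple os).
  by have := hn rc; rewrite hrc.
have hk : forall k (hk : (k < 6)%N),
    (adjmx psi *m ctxk C k (nth (false, false) os k) *m psi) 0 0 != 0.
  move=> k hk; have := hp (Ordinal hk).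
  by rewrite /prob /= size_take size_tuple hk (tnth_nth (false, false)).
have e1 : cell r c = member r c by rewrite /member ltn_ord.
have e2 : cell r c = member (3 + c) r by rewrite /member ltnNge leq_addr /= addKn.
apply: (@nonstab C (pauli2 C (cell r c)) (ctxk C r (nth (false, false) os r))
  (ctxk C (3 + c) (nth (false, false) os (3 + c))) (bitk r (nth (false, false) os r) c) psi).
- exact: good_cell.
- exact: hs.
- rewrite e1; exact: cert.
- have -> : ~~ bitk r (nth (false, false) os r) c =
            bitk (3 + c) (nth (false, false) os (3 + c)) r.
    by move: hm; rewrite /mism /=; case: (bitk _ _ _); case: (bitk _ _ _).
  rewrite e2; exact: cert.
- apply: hk; by case: r {hm e1 e2} => [[|[|[|]]]].
- apply: hk; by case: c {hm e1 e2} => [[|[|[|]]]].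
Qed.
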